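(* Let $r,s$ be integers with $s\ge 3$ and $s-r+1=0$, and let $G=(K_r\cup\overline{K_s})\vee\{v\}$, i.e. the graph obtained from the disjoint union of a complete graph on $r$ vertices and an edgeless graph on $s$ vertices by adding one new vertex $v$ adjacent to all $r+s$ of these vertices. Then $\mathrm{mur}(G)=3$.
   Context: For a finite simple undirected graph $G$ on vertices $v_1,\dots,v_n$, let $A_G$ be its $(0,1)$-adjacency matrix, $D_G=\mathrm{diag}(d_1,\dots,d_n)$ with $d_i$ the degree of $v_i$, $I$ the $n\times n$ identity matrix and $J$ the $n\times n$ all-ones matrix. A universal adjacency matrix of $G$ is any matrix $\alpha A_G+\beta I+\gamma J+\delta D_G$ with real scalars $\alpha,\beta,\gamma,\delta$ and $\alpha\neq 0$. The minimum universal rank $\mathrm{mur}(G)$ is the minimum rank over all universal adjacency matrices of $G$. *)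

(* Defs.v *)
From HB Require Import structures.
From mathcomp Require Import all_boot all_order all_algebra.
From mathcomp Require Import boolp reals.
Set Implicit Arguments. Unset Strict Implicit. Unset Printing Implicit Defensive.
Import Order.TTheory GRing.Theory Num.Theory.
Local Open Scope ring_scope.

Definition simple_graph (n : nat) (e : rel 'I_n) : Prop :=
  irreflexive e /\ symmetric e.

Section UA.
Variables (R : realType) (n : nat) (e : rel 'I_n).

Definition adjmx : 'M[R]_n := \matrix_(i, j) (e i j)%:R.
Definition deg (i : 'I_n) : nat := #|[set j | e i j]|.
Definition degmx : 'M[R]_n := diag_mx (\row_i (deg i)%:R).
Definition onesmx : 'M[R]_n := const_mx 1.

Definition univ_adj (a b c d : R) : 'M[R]_n :=
  a *: adjmx + b%:M + c *: onesmx + d *: degmx.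

Definition univ_rank_attained (k : nat) : bool :=
  `[< exists a b c d : R, a != 0 /\ \rank (univ_adj a b c d) = k >].

Lemma univ_rank_attained_ex : exists k, univ_rank_attained k.
Proof.
exists (\rank (univ_adj 1 0 0 0)); apply/asboolP.
by exists 1, 0, 0, 0; split => //; exact: oner_neq0.
Qed.

Definition mur : nat := ex_minn univ_rank_attained_ex.
End UA.

(* The graph (K_r ∪ co-K_s) ∨ {v} on vertices 'I_(r+s+1):
   0..r-1 form the clique K_r, r..r+s-1 the independent set, r+s is v. *)
Definition cone_clique_indep (r s : nat) : rel 'I_(r + s + 1) :=
  fun i j => (i != j) &&
    [|| ((i < r)%N && (j < r)%N), (val i == r + s)%N | (val j == r + s)%N].
Arguments cone_clique_indep : clear implicits.
Arguments mur : clear implicits.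

(* Main.v *)
Require Import Defs.
From HB Require Import structures.
From mathcomp Require Import all_boot all_order all_algebra.
From mathcomp Require Import boolp reals.
From mathcomp Require Import ring lra zify.
Set Implicit Arguments. Unset Strict Implicit. Unset Printing Implicit Defensive.
Import Order.TTheory GRing.Theory Num.Theory.
Local Open Scope ring_scope.

Definition cat (r s : nat) (i : 'I_(r + s + 1)) : nat :=
  if (i < r)%N then 0%N else if (i < r + s)%N then 1%N else 2%N.

Lemma cat0 r s (i : 'I_(r+s+1)) : (cat i == 0%N) = (i < r)%N.
Proof. by rewrite /cat; case: ifP => //; case: ifP. Qed.
Lemma cat2 r s (i : 'I_(r+s+1)) : (cat i == 2%N) = (nat_of_ord i == r + s)%N.
Proof.
have := ltn_ord i; rewrite /cat; case: ifP => h1 hi.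
  by apply/esym/negbTE/eqP; lia.
move/negbT: h1; rewrite -leqNgt => h1.
case: ifP => h2 /=.
  by apply/esym/negbTE/eqP; lia.
move/negbT: h2; rewrite -leqNgt => h2.
by apply/esym/eqP; rewrite eqxx; lia.
Qed.

Definition edgecat (x y : nat) : bool := [|| (x == 0%N) && (y == 0%N), x == 2%N | y == 2%N].

Lemma e_cat r s (i j : 'I_(r+s+1)) :
  cone_clique_indep r s i j = (i != j) && edgecat (cat i) (cat j).
Proof. by rewrite /cone_clique_indep /edgecat !cat0 !cat2. Qed.

Definition dcat (r s k : nat) : nat := if k == 0%N then r else if k == 1%N then 1%N else (r + s)%N.

Lemma card_lt r s : #|[set j : 'I_(r+s+1) | (j < r)%N]| = r.
Proof.
have H : (r <= r + s + 1)%N by lia.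
have -> : [set j : 'I_(r+s+1) | (j < r)%N] = widen_ord H @: [set: 'I_r].
  apply/setP => j; rewrite inE; apply/idP/imsetP.
    by move=> hj; exists (Ordinal hj) => //; apply/val_inj.
  by case=> k _ ->; rewrite /= ltn_ord.
by rewrite card_imset ?cardsT ?card_ord //; by move=> x y /(congr1 val) /= /val_inj.
Qed.

Lemma deg_cat r s (i : 'I_(r+s+1)) :
  deg (cone_clique_indep r s) i = dcat r s (cat i).
Proof.
have hv : (r + s < r + s + 1)%N by lia.
pose v := Ordinal hv.
rewrite /deg /dcat.
case: (boolP (cat i == 0%N)) => h0.
  have -> : [set j | cone_clique_indep r s i j] = (v |: [set j : 'I_(r+s+1) | (j < r)%N]) :\ i.
    apply/setP => j; rewrite !inE e_cat /edgecat h0 /= cat0 !cat2 eq_sym.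
    have -> : (nat_of_ord i == r + s)%N = false by move: h0; rewrite cat0; lia.
    by rewrite /= orbC.
  have := cardsD1 i (v |: [set j : 'I_(r+s+1) | (j < r)%N]).
  rewrite cardsU1 card_lt !inE.
  move: h0; rewrite cat0 => h0; rewrite h0 orbT.
  have -> : (v < r)%N = false by rewrite /=; lia.
  by move=> H; lia.
case: (boolP (cat i == 1%N)) => h1.
  have -> : [set j | cone_clique_indep r s i j] = [set v].
    apply/setP => j; rewrite !inE e_cat /edgecat (negbTE h0) /= (eqP h1) /= cat2 -!val_eqE /=.
    case: (eqVneq (val j) (r+s)%N) => hj; rewrite ?andbT ?andbF //.
    move: h1; rewrite /cat; case: ifP => // _; case: ifP => // hi _.
    by apply/eqP => E; move: hi; rewrite E hj ltnn.
  by rewrite cards1.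
have -> : [set j | cone_clique_indep r s i j] = [set~ i].
  apply/setP => j; rewrite !inE e_cat /edgecat eq_sym.
  have -> : cat i = 2%N.
    by move: h0 h1; rewrite /cat; case: ifP => //; case: ifP.
  by rewrite eqxx /= ?orbT ?andbT.
rewrite cardsC1 card_ord; lia.
Qed.

Lemma uaE (R : realType) r s (a b c d : R) (i j : 'I_(r+s+1)) :
  univ_adj (cone_clique_indep r s) a b c d i j =
  if i == j then b + c + d * (dcat r s (cat i))%:R
  else a * (edgecat (cat i) (cat j))%:R + c.
Proof.
rewrite /univ_adj /adjmx /degmx /onesmx !mxE e_cat deg_cat.
case: (eqVneq i j) => [<-|ne] /=.
  by rewrite mulr0 add0r mulr1n mulr1n mulr1; ring.
by rewrite !mulr0n mulr0 mulr1 !addr0.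
Qed.

Lemma det3 (R : comNzRingType) (A : 'M[R]_3) : \det A =
  A 0 0 * (A 1 1 * A 2 2 - A 1 2 * A 2 1)
  - A 0 1 * (A 1 0 * A 2 2 - A 1 2 * A 2 0)
  + A 0 2 * (A 1 0 * A 2 1 - A 1 1 * A 2 0).
Proof.
have [f HA] : exists f : nat -> nat -> R, forall i j : 'I_3, A i j = f (val i) (val j).
  by exists (fun a b => A (inord a) (inord b)) => i j; rewrite !inord_val.
rewrite (expand_det_row _ 0) !big_ord_recr big_ord0 /= add0r.
rewrite /cofactor.
rewrite !(expand_det_row _ 0) !big_ord_recr big_ord0 /= !add0r.
rewrite ?big_ord0 ?add0r /cofactor !det_mx11 !mxE !HA /bump /=.
rewrite ?add0n ?expr0 ?expr1 ?exprS ?expr0.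
ring.
Qed.

Lemma sum_delta (R : comNzRingType) n (x : 'I_n) (F : 'I_n -> R) :
  \sum_j (j == x)%:R * F j = F x.
Proof.
rewrite (bigD1 x) //= eqxx mul1r big1 ?addr0 // => j /negbTE ->.
by rewrite mul0r.
Qed.

Lemma rank_ge3 (R : fieldType) n (M : 'M[R]_n) (a b cc : 'I_3 -> 'I_n) (w : 'I_3 -> R) :
  \det (\matrix_(t, u) (M (a t) (cc u) - w t * M (b t) (cc u))) != 0 ->
  (3 <= \rank M)%N.
Proof.
set N := \matrix_(t, u) _ => hN.
pose P : 'M[R]_(3, n) := \matrix_(t, j) ((j == a t)%:R - w t * (j == b t)%:R).
pose Q : 'M[R]_(n, 3) := \matrix_(j, u) ((j == cc u)%:R).
have EN : N = P *m M *m Q.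
  apply/matrixP => t u; rewrite !mxE.
  under eq_bigr => k _ do rewrite !mxE mulrC.
  rewrite sum_delta.
  under eq_bigr => j _ do rewrite /P mxE mulrBl -mulrA.
  by rewrite sumrB -mulr_sumr !sum_delta.
have hr : \rank N = 3%N by apply: mxrank_unit; rewrite unitmxE unitfE.
rewrite -hr EN.
exact: leq_trans (mxrankM_maxl _ _) (mxrankM_maxr _ _).
Qed.

Lemma rank_le3 (R : fieldType) n (M : 'M[R]_n) (f : 'I_n -> 'I_3) (Q : 'M[R]_3) :
  (forall i j, M i j = Q (f i) (f j)) -> (\rank M <= 3)%N.
Proof.
move=> HM.
pose U : 'M[R]_(n, 3) := \matrix_(i, t) ((t == f i)%:R).
pose W : 'M[R]_(3, n) := \matrix_(t, j) (Q t (f j)).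
have -> : M = U *m W.
  apply/matrixP => i j; rewrite HM !mxE.
  under eq_bigr => k _ do rewrite !mxE.
  by rewrite sum_delta.
exact: leq_trans (mxrankM_maxl _ _) (rank_leq_col _).
Qed.

Lemma eq_neq0 (R : nzRingType) (x y : R) : x = y -> y != 0 -> x != 0.
Proof. by move=> ->. Qed.

Definition pick3 (T : Type) (x y z : T) (t : 'I_3) : T :=
  if val t == 0%N then x else if val t == 1%N then y else z.

Lemma lower (R : realType) s (a b c d : R) : (3 <= s)%N -> a != 0 ->
  (3 <= \rank (univ_adj (cone_clique_indep s.+1 s) a b c d))%N.
Proof.
move=> hs ha.
have := uaE (r:=s.+1) (s:=s) a b c d.
move: (univ_adj (cone_clique_indep s.+1 s) a b c d) => M HM.
have h0 : (0 < s.+1 + s + 1)%N by lia.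
have h1 : (1 < s.+1 + s + 1)%N by lia.
have h2 : (2 < s.+1 + s + 1)%N by lia.
have h3 : (s.+1 < s.+1 + s + 1)%N by lia.
have h4 : (s.+2 < s.+1 + s + 1)%N by lia.
have h5 : (s.+3 < s.+1 + s + 1)%N by lia.
have h6 : (s.+1 + s < s.+1 + s + 1)%N by lia.
have c0 : cat (Ordinal h0) = 0%N by rewrite /cat /=; repeat (case: ifP => ?; try (exfalso; lia)).
have c1 : cat (Ordinal h1) = 0%N by rewrite /cat /=; repeat (case: ifP => ?; try (exfalso; lia)).
have c2 : cat (Ordinal h2) = 0%N by rewrite /cat /=; repeat (case: ifP => ?; try (exfalso; lia)).
have c3 : cat (Ordinal h3) = 1%N by rewrite /cat /=; repeat (case: ifP => ?; try (exfalso; lia)).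
have c4 : cat (Ordinal h4) = 1%N by rewrite /cat /=; repeat (case: ifP => ?; try (exfalso; lia)).
have c5 : cat (Ordinal h5) = 1%N by rewrite /cat /=; repeat (case: ifP => ?; try (exfalso; lia)).
have c6 : cat (Ordinal h6) = 2%N by rewrite /cat /=; repeat (case: ifP => ?; try (exfalso; lia)).
have ordE : forall i j : 'I_(s.+1 + s + 1), (i == j) = (nat_of_ord i == nat_of_ord j)%N by [].
case: (eqVneq (b + d) 0) => hq; last first.
  apply: (@rank_ge3 _ _ M (pick3 (Ordinal h3) (Ordinal h4) (Ordinal h6)) (pick3 (Ordinal h4) (Ordinal h5) (Ordinal h3)) (pick3 (Ordinal h3) (Ordinal h5) (Ordinal h0)) (fun _ => 1)).
  rewrite det3 !mxE /pick3 /= !HM !ordE ?c0 ?c1 ?c2 ?c3 ?c4 ?c5 ?c6 /edgecat /dcat /=.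
  repeat (case: ifP => ?; try (exfalso; lia)); rewrite /=.
  apply: (eq_neq0 (y := - ((b + d) ^+ 2 * a))); first by ring.
  by rewrite oppr_eq0 mulf_neq0 // expf_neq0.
case: (eqVneq (b + d * (s.+1)%:R - a) 0) => hp; last first.
  apply: (@rank_ge3 _ _ M (pick3 (Ordinal h0) (Ordinal h1) (Ordinal h6)) (pick3 (Ordinal h1) (Ordinal h2) (Ordinal h3)) (pick3 (Ordinal h0) (Ordinal h2) (Ordinal h4)) (fun _ => 1)).
  rewrite det3 !mxE /pick3 /= !HM !ordE ?c0 ?c1 ?c2 ?c3 ?c4 ?c5 ?c6 /edgecat /dcat /=.
  repeat (case: ifP => ?; try (exfalso; lia)); rewrite /=.
  apply: (eq_neq0 (y := - ((b + d * (s.+1)%:R - a) ^+ 2 * a))); first by ring.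
  by rewrite oppr_eq0 mulf_neq0 // expf_neq0.
have hb : b = - d by apply/eqP; rewrite -addr_eq0 hq.
have ha' : a = d * s%:R.
  move/eqP: hp; rewrite subr_eq0 => /eqP <-.
  by rewrite hb -natr1; ring.
apply: (@rank_ge3 _ _ M (pick3 (Ordinal h0) (Ordinal h3) (Ordinal h6)) (pick3 (Ordinal h0) (Ordinal h0) (Ordinal h0)) (pick3 (Ordinal h0) (Ordinal h3) (Ordinal h6)) (fun _ => 0)).
rewrite det3 !mxE /pick3 /= !HM !ordE ?c0 ?c1 ?c2 ?c3 ?c4 ?c5 ?c6 /edgecat /dcat /=.
  repeat (case: ifP => ?; try (exfalso; lia)); rewrite /=.
apply: (eq_neq0 (y := - a ^+ 3)).
  rewrite hb ha' natrD -!natr1. ring.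
by rewrite oppr_eq0 expf_neq0.
Qed.

Lemma cat_lt3 r s (i : 'I_(r+s+1)) : (cat i < 3)%N.
Proof. by rewrite /cat; case: ifP => //; case: ifP. Qed.

Lemma upper (R : realType) s : (3 <= s)%N ->
  (\rank (univ_adj (R:=R) (cone_clique_indep s.+1 s) s%:R (-1) 0 1) <= 3)%N.
Proof.
move=> hs.
pose g (x y : nat) : R := if (x == 2%N) && (y == 2%N) then 2 * s%:R else s%:R * (edgecat x y)%:R.
apply: (@rank_le3 _ _ _ (fun i => inord (cat i)) (\matrix_(t, u) g (val t) (val u))) => i j.
rewrite uaE mxE /= !inordK ?cat_lt3 // /g.
case: (eqVneq i j) => [<-|ne].
  rewrite /dcat /edgecat.
  case Hc : (cat i) => [|[|[|k]]] /=.
  - by rewrite -natr1; ring.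
  - by ring.
  - by rewrite natrD -!natr1; ring.
  - by have := cat_lt3 i; rewrite Hc.
case: ifP => [/andP [/eqP h1 /eqP h2] | _]; last by rewrite addr0.
exfalso; move/eqP: h1; move/eqP: h2; rewrite !cat2 => /eqP h2 /eqP h1.
by move: ne; rewrite -val_eqE /= h1 h2 eqxx.
Qed.

Theorem theorem22 (R : realType) (r s : nat) :
  (3 <= s)%N -> (s%:Z - r%:Z + 1 = 0)%R ->
  mur R (r + s + 1) (cone_clique_indep r s) = 3%N.
Proof.
move=> hs hrs.
have hr : r = s.+1 by lia.
subst r.
rewrite /mur; case: ex_minnP => m hm hmin.
have h3 : (3 <= m)%N.
  move/asboolP: hm => [a [b [c [d [ha <-]]]]].
  exact: lower.
have h3' : univ_rank_attained R (cone_clique_indep s.+1 s) 3.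
  apply/asboolP; exists s%:R, (-1), 0, 1; split.
    by rewrite pnatr_eq0; lia.
  apply/eqP; rewrite eqn_leq upper // lower //.
  by rewrite pnatr_eq0; lia.
have := hmin _ h3'; lia.
Qed.
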